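(* Let $n\ge2$, let $X_1,\dots,X_n$ be infinite dimensional Hilbert spaces and $D_k\in\mathcal{B}(X_k)$. Then for every $A\in\mathcal{B}_n$, $$\bigcup_{k=1}^n\sigma_r(D_k)=\sigma_r(T_n^d(A))\cup\Delta,\qquad \Delta=\bigcup_{k=1}^{n-1}\Big\{\lambda\in\sigma_r(D_k):\ \beta(D_k-\lambda)\le\sum_{s=k+1}^{n}\alpha(D_s-\lambda)\Big\}.$$ In particular, if $\Delta=\emptyset$ then $\bigcup_{k=1}^n\sigma_r(D_k)=\sigma_r(T_n^d(A))$ for every $A\in\mathcal{B}_n$.
   Context: For a bounded operator $T$, $\alpha(T)=\dim\mathcal{N}(T)$, $\beta(T)=\operatorname{codim}\mathcal{R}(T)$, values in $\{0,1,\dots\}\cup\{\infty\}$, sums and comparisons taken in this extended set. $T$ is right invertible if $\beta(T)=0$ and $\mathcal{N}(T)$ is complemented; $\sigma_r(T)=\{\lambda\in\mathbb{C}:\lambda-T$ not right invertible$\}$. $\mathcal{B}_n$ is the set of tuples $A=(A_{ij})_{1\le i<j\le n}$, $A_{ij}\in\mathcal{B}(X_j,X_i)$; $T_n^d(A)$ is the upper triangular operator matrix on $X_1\oplus\cdots\oplus X_n$ with diagonal $D_1,\dots,D_n$, entries $A_{ij}$ above the diagonal and zeros below. *)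

(* Defs.v *)
From HB Require Import structures.
From mathcomp Require Import all_boot all_order all_algebra.
From mathcomp Require Import boolp classical_sets reals.
From mathcomp.real_closed Require Import complex.

Set Implicit Arguments.
Unset Strict Implicit.
Unset Printing Implicit Defensive.

Import Order.TTheory GRing.Theory Num.Theory.
Local Open Scope ring_scope.

(* Extended naturals {0,1,...} U {oo}: [Some k] is k, [None] is oo.    *)
Definition enat := option nat.
Definition eadd (a b : enat) : enat :=
  match a, b with Some x, Some y => Some (x + y)%N | _, _ => None end.
Definition ele (a b : enat) : Prop :=
  match a, b with
  | _, None => True
  | None, Some _ => False
  | Some x, Some y => (x <= y)%N
  end.

(* The (possibly infinite) value determined by a family of properties
   "the quantity is >= k": the sup of the k with [ge k]. *)
Definition enat_of (ge : nat -> Prop) : enat :=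
  match pselect (forall k, ge k) with
  | left _ => None
  | right h =>
      Some (@ex_minn (fun k => `[< ~ ge k >])
              (let: ex_intro k hk := (proj2 (existsNP ge) h)
               in ex_intro _ k (asboolT hk))).-1
  end.

Section LinAlg.
Variables (R : realType) (V : lmodType R[i]).

(* k vectors linearly independent modulo the subspace (set) M;
   with M = [set 0] this is plain linear independence. *)
Definition indep_mod (M : set V) (k : nat) (v : 'I_k -> V) : Prop :=
  forall c : 'I_k -> R[i], M (\sum_(i < k) c i *: v i) -> forall i, c i = 0.

Definition dim_ge (N : set V) (k : nat) : Prop :=
  exists v : 'I_k -> V, (forall i, N (v i)) /\ indep_mod [set 0] v.
Definition edim (N : set V) : enat := enat_of (dim_ge N).

Definition codim_ge (M : set V) (k : nat) : Prop :=
  exists v : 'I_k -> V, indep_mod M v.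
Definition ecodim (M : set V) : enat := enat_of (codim_ge M).

Definition subspace (M : set V) : Prop :=
  M 0 /\ forall (a : R[i]) x y, M x -> M y -> M (a *: x + y).

Definition cvg_norm (nrm : V -> R) (u : nat -> V) (l : V) : Prop :=
  forall e : R, 0 < e -> exists N : nat, forall m, (N <= m)%N -> nrm (u m - l) < e.
Definition cauchy_norm (nrm : V -> R) (u : nat -> V) : Prop :=
  forall e : R, 0 < e -> exists N : nat,
    forall m p, (N <= m)%N -> (N <= p)%N -> nrm (u m - u p) < e.

Definition closed_norm (nrm : V -> R) (M : set V) : Prop :=
  forall (u : nat -> V) (l : V), (forall m, M (u m)) -> cvg_norm nrm u l -> M l.

Definition complemented (nrm : V -> R) (N : set V) : Prop :=
  exists M : set V, subspace M /\ closed_norm nrm M /\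
    (forall x, N x -> M x -> x = 0) /\
    (forall x, exists y z, N y /\ M z /\ x = y + z).
End LinAlg.

Section Ops.
Variables (R : realType) (V W : lmodType R[i]).

Definition ker (T : V -> W) : set V := [set x | T x = 0].
Definition range (T : V -> W) : set W := [set y | exists x, T x = y].

Definition alpha (T : V -> W) : enat := edim (ker T).
Definition beta (T : V -> W) : enat := ecodim (range T).

Definition linear_map (T : V -> W) : Prop :=
  forall (a : R[i]) x y, T (a *: x + y) = a *: T x + T y.

Definition bounded_op (nV : V -> R) (nW : W -> R) (T : V -> W) : Prop :=
  linear_map T /\ exists K : R, forall x, nW (T x) <= K * nV x.
End Ops.

Section RightSpec.
Variables (R : realType) (V : lmodType R[i]).

Definition right_invertible (nrm : V -> R) (T : V -> V) : Prop :=
  beta T = Some 0%N /\ complemented nrm (ker T).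

Definition shift (l : R[i]) (T : V -> V) : V -> V := fun x => l *: x - T x.

Definition shiftm (l : R[i]) (T : V -> V) : V -> V := fun x => T x - l *: x.

Definition sigma_r (nrm : V -> R) (T : V -> V) : set R[i] :=
  [set l | ~ right_invertible nrm (shift l T)].
End RightSpec.

Record hilbert (R : realType) := Hilbert {
  hcar :> lmodType R[i];
  hip : hcar -> hcar -> R[i];
  hip_linl : forall (a : R[i]) x y z, hip (a *: x + y) z = a * hip x z + hip y z;
  hip_sym : forall x y, hip y x = (hip x y)^*;
  hip_ge0 : forall x, 0 <= hip x x;
  hip_def : forall x, hip x x = 0 -> x = 0;
  hcomplete : forall u : nat -> hcar,
    cauchy_norm (fun x => Num.sqrt (complex.Re (hip x x))) u ->
    exists l, cvg_norm (fun x => Num.sqrt (complex.Re (hip x x))) u l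
}.

Definition hnorm (R : realType) (H : hilbert R) (x : H) : R :=
  Num.sqrt (complex.Re (hip x x)).

Definition infinite_dim (R : realType) (H : hilbert R) : Prop :=
  forall k, dim_ge [set: (H : lmodType R[i])] k.

Section DSum.
Variables (R : realType) (n : nat) (X : 'I_n -> hilbert R).

Definition dsum : Type := forall i : 'I_n, (X i : lmodType R[i]).

HB.instance Definition _ := Choice.copy dsum (forall i : 'I_n, (X i : lmodType R[i])).


Definition ds_zero : dsum := fun i => 0.
Definition ds_opp (x : dsum) : dsum := fun i => - x i.
Definition ds_add (x y : dsum) : dsum := fun i => x i + y i.
Definition ds_scale (a : R[i]) (x : dsum) : dsum := fun i => a *: x i.

Lemma ds_addA : associative ds_add.
Proof. by move=> x y z; apply: functional_extensionality_dep => i; rewrite /ds_add addrA. Qed.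
Lemma ds_addC : commutative ds_add.
Proof. by move=> x y; apply: functional_extensionality_dep => i; rewrite /ds_add addrC. Qed.
Lemma ds_add0 : left_id ds_zero ds_add.
Proof. by move=> x; apply: functional_extensionality_dep => i; rewrite /ds_add add0r. Qed.
Lemma ds_addN : left_inverse ds_zero ds_opp ds_add.
Proof. by move=> x; apply: functional_extensionality_dep => i; rewrite /ds_add addNr. Qed.

HB.instance Definition _ := GRing.isZmodule.Build dsum ds_addA ds_addC ds_add0 ds_addN.

Lemma ds_scaleA a b (v : dsum) : ds_scale a (ds_scale b v) = ds_scale (a * b) v.
Proof. by apply: functional_extensionality_dep => i; rewrite /ds_scale scalerA. Qed.
Lemma ds_scale1 : left_id 1 ds_scale.
Proof. by move=> x; apply: functional_extensionality_dep => i; rewrite /ds_scale scale1r. Qed.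
Lemma ds_scaleDr : right_distributive ds_scale +%R.
Proof. by move=> a x y; apply: functional_extensionality_dep => i; rewrite /ds_scale scalerDr. Qed.
Lemma ds_scaleDl (v : dsum) : {morph ds_scale^~ v : a b / a + b}.
Proof. by move=> a b; apply: functional_extensionality_dep => i; rewrite /ds_scale scalerDl. Qed.

HB.instance Definition _ :=
  GRing.Zmodule_isLmodule.Build R[i] dsum ds_scaleA ds_scale1 ds_scaleDr ds_scaleDl.

Definition ds_norm (x : dsum) : R :=
  Num.sqrt (\sum_(i < n) hnorm (x i) ^+ 2).

Definition Tnd (D : forall k : 'I_n, X k -> X k)
    (A : forall i j : 'I_n, X j -> X i) : dsum -> dsum :=
  fun x i => D i (x i) + \sum_(j < n | (i < j)%N) A i j (x j).
End DSum.

(* Main.v *)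
Require Import Defs.
From HB Require Import structures.
From mathcomp Require Import all_boot all_order all_algebra.
From mathcomp Require Import boolp classical_sets reals.
From mathcomp.real_closed Require Import complex.
From mathcomp Require Import ring lra zify.
Set Implicit Arguments.
Unset Strict Implicit.
Unset Printing Implicit Defensive.
Import Order.TTheory GRing.Theory Num.Theory.
Local Open Scope complex_scope.
Local Open Scope ring_scope.
Local Open Scope classical_set_scope.
Section Sqrt.
Variable R : realType.
Lemma sqrt_le_sq (a b : R) : 0 <= b -> a <= b ^+ 2 -> Num.sqrt a <= b.
Proof.
move=> hb hab; have := ler_wsqrtr hab; rewrite sqrtr_sqr ger0_norm //.
Qed.
Lemma sqrt_lt_sq (a b : R) : 0 < b -> a < b ^+ 2 -> Num.sqrt a < b.
Proof.
move=> hb hab; have h : 0 < b ^+ 2 by rewrite exprn_gt0.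
by rewrite -(ger0_norm (ltW hb)) -sqrtr_sqr ltr_sqrt.
Qed.
Lemma sq_lt_sqrt (a b : R) : 0 <= a -> Num.sqrt a < b -> a < b ^+ 2.
Proof.
move=> ha h; rewrite -(sqr_sqrtr ha); have := sqrtr_ge0 a; nra.
Qed.
End Sqrt.

Section IP.
Variables (R : realType) (H : hilbert R).
Local Notation ip := (@hip R H).
Local Notation nrm := (@hnorm R H).
Definition qq (x : H) : R := complex.Re (ip x x).
Definition rip (x y : H) : R := complex.Re (ip x y).

Lemma ip0l z : ip 0 z = 0.
Proof.
have := hip_linl 1 (0 : H) 0 z; rewrite scale1r addr0 mul1r => h.
by apply/eqP; rewrite -(subrr (ip 0 z)) {2}h addrK eqxx.
Qed.
Lemma ipDl x y z : ip (x + y) z = ip x z + ip y z.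
Proof. by have := hip_linl 1 x y z; rewrite scale1r mul1r. Qed.
Lemma ipZl a x z : ip (a *: x) z = a * ip x z.
Proof. by have := hip_linl a x 0 z; rewrite addr0 ip0l addr0. Qed.
Lemma ipNl x z : ip (- x) z = - ip x z.
Proof. by rewrite -scaleN1r ipZl mulN1r. Qed.
Lemma ipBl x y z : ip (x - y) z = ip x z - ip y z.
Proof. by rewrite ipDl ipNl. Qed.
Lemma ip0r z : ip z 0 = 0.
Proof. by rewrite hip_sym ip0l rmorph0. Qed.
Lemma ipDr x y z : ip x (y + z) = ip x y + ip x z.
Proof. by rewrite hip_sym ipDl [ip x y]hip_sym [ip x z]hip_sym rmorphD. Qed.
Lemma ipZr a x z : ip x (a *: z) = a^* * ip x z.
Proof. by rewrite hip_sym ipZl [ip x z]hip_sym rmorphM. Qed.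
Lemma ipNr x z : ip x (- z) = - ip x z.
Proof. by rewrite hip_sym ipNl [ip x z]hip_sym rmorphN. Qed.
Lemma ipBr x y z : ip x (y - z) = ip x y - ip x z.
Proof. by rewrite ipDr ipNr. Qed.

Lemma ip_self x : ip x x = (qq x)%:C.
Proof.
rewrite /qq; have := hip_ge0 x; case: (ip x x) => a b.
by rewrite lecE /= => /andP[/eqP -> _].
Qed.
Lemma qq_ge0 x : 0 <= qq x.
Proof. by have := hip_ge0 x; rewrite ip_self ler0c. Qed.
Lemma qq_eq0 x : qq x = 0 -> x = 0.
Proof. by move=> h; apply: hip_def; rewrite ip_self h. Qed.

Lemma Re_conj (z : R[i]) : complex.Re (z^*) = complex.Re z.
Proof. by case: z. Qed.
Lemma Re_D (z w : R[i]) : complex.Re (z + w) = complex.Re z + complex.Re w.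
Proof. by case: z; case: w. Qed.
Lemma Re_N (z : R[i]) : complex.Re (- z) = - complex.Re z.
Proof. by case: z. Qed.
Lemma Re_rM (t : R) (z : R[i]) : complex.Re (t%:C * z) = t * complex.Re z.
Proof. by case: z => a b /=; rewrite mul0r subr0. Qed.
Lemma conj_rC (t : R) : (t%:C : R[i])^* = t%:C.
Proof. by apply/eqP; rewrite eq_complex /= oppr0 !eqxx. Qed.

Lemma ripC x y : rip x y = rip y x.
Proof. by rewrite /rip hip_sym Re_conj. Qed.
Lemma ripDl x y z : rip (x + y) z = rip x z + rip y z.
Proof. by rewrite /rip ipDl Re_D. Qed.
Lemma ripDr x y z : rip x (y + z) = rip x y + rip x z.
Proof. by rewrite /rip ipDr Re_D. Qed.
Lemma ripNl x z : rip (- x) z = - rip x z.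
Proof. by rewrite /rip ipNl Re_N. Qed.
Lemma ripNr x z : rip x (- z) = - rip x z.
Proof. by rewrite /rip ipNr Re_N. Qed.
Lemma ripZl t x z : rip (t%:C *: x) z = t * rip x z.
Proof. by rewrite /rip ipZl Re_rM. Qed.
Lemma ripZr t x z : rip x (t%:C *: z) = t * rip x z.
Proof. by rewrite /rip ipZr conj_rC Re_rM. Qed.
Lemma qq_rip x : qq x = rip x x.
Proof. by []. Qed.

Lemma qqD x y : qq (x + y) = qq x + qq y + 2 * rip x y.
Proof.
rewrite !qq_rip ripDl !ripDr (ripC y x); ring.
Qed.
Lemma qqN x : qq (- x) = qq x.
Proof. by rewrite !qq_rip ripNl ripNr opprK. Qed.
Lemma qqB x y : qq (x - y) = qq x + qq y - 2 * rip x y.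
Proof. by rewrite qqD qqN ripNr; ring. Qed.
Lemma qqZ t x : qq (t%:C *: x) = t ^+ 2 * qq x.
Proof. by rewrite !qq_rip ripZl ripZr; ring. Qed.

Lemma CS x y : rip x y ^+ 2 <= qq x * qq y.
Proof.
set r := rip x y.
have key t : 0 <= qq x + t ^+ 2 * qq y + 2 * t * r.
  by have := qq_ge0 (x + t%:C *: y); rewrite qqD qqZ ripZr /r mulrA.
have hy := qq_ge0 y; have hx := qq_ge0 x.
have [y0|ypos] := eqVneq (qq y) 0.
  rewrite y0 mulr0.
  have [->|rn0] := eqVneq r 0; first by rewrite expr0n.
  have := key (- (qq x + 1) / (2 * r)); rewrite y0 mulr0 addr0.
  have -> : 2 * (- (qq x + 1) / (2 * r)) * r = - (qq x + 1).
    by field; rewrite rn0.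
  lra.
have yp : 0 < qq y by rewrite lt_def ypos hy.
have := key (- r / qq y).
have -> : qq x + (- r / qq y) ^+ 2 * qq y + 2 * (- r / qq y) * r
          = (qq x * qq y - r ^+ 2) / qq y by field.
by rewrite pmulr_lge0 ?invr_gt0 // subr_ge0.
Qed.

Lemma rip_le x y : rip x y <= nrm x * nrm y.
Proof.
rewrite /hnorm -sqrtrM ?qq_ge0 //; apply: le_trans (ler_norm _) _.
rewrite -sqrtr_sqr; apply: ler_wsqrtr; exact: CS.
Qed.

Lemma hnorm_ge0 x : 0 <= nrm x. Proof. exact: sqrtr_ge0. Qed.
Lemma hnorm_sq x : nrm x ^+ 2 = qq x. Proof. by rewrite sqr_sqrtr // qq_ge0. Qed.
Lemma hnormN x : nrm (- x) = nrm x. Proof. by rewrite /hnorm -/(qq _) qqN. Qed.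

Lemma hnormD x y : nrm (x + y) <= nrm x + nrm y.
Proof.
rewrite {1}/hnorm -/(qq _); apply: sqrt_le_sq.
  by rewrite addr_ge0 ?hnorm_ge0.
rewrite qqD -!hnorm_sq; have := rip_le x y; nra.
Qed.
End IP.
Section Real.
Variable R : realType.
Lemma archi_inv (e : R) : 0 < e ->
  exists K : nat, forall m, (K <= m)%N -> (m.+1%:R : R)^-1 < e.
Proof.
move=> he; exists (Num.Def.archi_bound e^-1) => m hm.
have hi : 0 < e^-1 by rewrite invr_gt0.
have hb := archi_boundP (ltW hi).
have hK : (Num.Def.archi_bound e^-1)%:R <= (m.+1%:R : R).
  by rewrite ler_nat; apply: leq_trans hm _.
have hs : 0 < (m.+1%:R : R) by rewrite ltr0n.
rewrite -(invrK e) ltf_pV2 ?posrE ?invr_gt0 //.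
exact: lt_le_trans hb hK.
Qed.
Lemma small_eq0 (r : R) : (forall e, 0 < e -> `|r| < e) -> r = 0.
Proof.
move=> h; apply/eqP; apply/negPn/negP => hr.
by have := h `|r|; rewrite normr_gt0 hr ltxx => /(_ isT).
Qed.
End Real.

Section Proj.
Variables (R : realType) (H : hilbert R).
Local Notation ip := (@hip R H).
Local Notation nrm := (@hnorm R H).
Local Notation rip := (@rip R H).
Local Notation qq := (@qq R H).

Lemma cmplx_eq0 (z : R[i]) : complex.Re z = 0 -> complex.Re ('i * z) = 0 -> z = 0.
Proof.
case: z => a b /= -> ; rewrite !mul0r !mul1r => h.
by have -> : b = 0 by lra.
Qed.

Lemma rip_i y z : rip ('i *: y) z = complex.Re ('i * ip y z).
Proof. by rewrite /rip ipZl. Qed.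

Lemma orth_lim y (u : nat -> H) l :
  (forall m, rip y (u m) = 0) -> cvg_norm nrm u l -> rip y l = 0.
Proof.
move=> hu hc; apply: small_eq0 => e he.
have hy := hnorm_ge0 y.
have hd : 0 < e / (nrm y + 1) by rewrite divr_gt0 // ltr_pwDr.
have [K hK] := hc _ hd; have hm := hK K (leqnn K).
have eq1 : rip y (u K - l) = - rip y l by rewrite ripDr ripNr hu add0r.
have h1 := rip_le y (u K - l).
have h2 := rip_le (- y) (u K - l).
rewrite ripNl eq1 opprK hnormN in h2. rewrite eq1 in h1.
have h3 : nrm y * nrm (u K - l) <= nrm y * (e / (nrm y + 1)).
  by rewrite ler_wpM2l // ltW.
have h4 : nrm y * (e / (nrm y + 1)) < e.
  rewrite mulrA ltr_pdivrMr ?ltr_pwDr //; nra.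
rewrite ltr_norml; apply/andP; split; lra.
Qed.

Lemma le_norm_sq (a : R) (x : H) : 0 <= a -> a <= nrm x -> a ^+ 2 <= qq x.
Proof. move=> ha h; rewrite -hnorm_sq; nra. Qed.

Variable N : set H.
Hypothesis sN : subspace N.
Hypothesis cN : closed_norm nrm N.

Lemma N0 : N 0. Proof. by case: sN. Qed.
Lemma NZD a x y : N x -> N y -> N (a *: x + y). Proof. by case: sN => _; apply. Qed.
Lemma NZ a x : N x -> N (a *: x). Proof. by move=> h; rewrite -[_ *: _]addr0; apply: NZD => //; exact: N0. Qed.
Lemma ND x y : N x -> N y -> N (x + y). Proof. by move=> hx hy; rewrite -[x]scale1r; exact: NZD. Qed.

Lemma proj_min x : exists y0, N y0 /\ forall y, N y -> qq (x - y0) <= qq (x - y).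
Proof.
pose S := [set r | exists y, N y /\ r = nrm (x - y)].
pose d := inf S.
have S0 : S !=set0 by exists (nrm (x - 0)); exists 0; split => //; exact: N0.
have Slb : lbound S 0 by move=> r [y [_ ->]]; exact: hnorm_ge0.
have hS : has_inf S by split => //; exists 0.
have d0 : 0 <= d by apply: lb_le_inf.
have dle y : N y -> d <= nrm (x - y).
  by move=> hy; apply: ge_inf; [case: hS | exists y].
have ex m : exists y, N y /\ nrm (x - y) < d + (m.+1%:R)^-1.
  have hi : 0 < (m.+1%:R : R)^-1 by rewrite invr_gt0 ltr0Sn.
  have [r [y [hy ->]] hr] := inf_adherent hi hS.
  by exists y.
have [f hf] := choice ex.
pose e m : R := (m.+1%:R)^-1.
have e0 m : 0 < e m by rewrite invr_gt0 ltr0Sn.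
have e1 m : e m <= 1 by rewrite invf_le1 ?ltr0Sn // ler1n.
have emono m K : (K <= m)%N -> e m <= e K.
  by move=> h; rewrite lef_pV2 ?posrE ?ltr0Sn // ler_nat ltnS.
have qf m : qq (x - f m) <= (d + e m) ^+ 2.
  have [_ h] := hf m; rewrite -/(e m) in h.
  have := hnorm_ge0 (x - f m); have := e0 m; rewrite -hnorm_sq; nra.
have para m p : qq (f m - f p) <= 4 * d * (e m + e p) + 2 * e m ^+ 2 + 2 * e p ^+ 2.
  have [hm _] := hf m; have [hp _] := hf p.
  pose mid := ((2 : R)^-1)%:C *: (f m + f p).
  have hmid : N mid by apply: NZ; apply: ND.
  have hab : (x - f m) + (x - f p) = (2 : R)%:C *: (x - mid).
    rewrite /mid scalerBr scalerA -rmorphM mulfV ?pnatr_eq0 // scale1r.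
    rewrite rmorph_nat mulr2n scalerDl scale1r; rewrite opprD; rewrite !addrA; congr (_ - _).
    by rewrite addrAC.
  have hba : (x - f p) - (x - f m) = f m - f p.
    by rewrite opprB addrC addrA subrK.
  have Q := qqD (x - f m) (x - f p).
  have Q2 := qqB (x - f p) (x - f m).
  rewrite hab qqZ in Q; rewrite hba ripC in Q2.
  have dm := le_norm_sq d0 (dle _ hmid).
  have := qf m; have := qf p; have := e0 m; have := e0 p. nra.
have cauchy : cauchy_norm nrm f.
  move=> eps heps.
  pose B := (8 * d + 4) / eps ^+ 2.
  have he2 : 0 < eps ^+ 2 by rewrite exprn_gt0.
  have hB : 0 <= B by rewrite divr_ge0 // ?ltW //; lra.
  exists (Num.Def.archi_bound B) => m p hmK hpK.
  set K := Num.Def.archi_bound B in hmK hpK.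
  have hBK := archi_boundP hB; rewrite -/K in hBK.
  have hKe : (8 * d + 4) * e K < eps ^+ 2.
    have hK1 : (K%:R : R) < K.+1%:R by rewrite ltr_nat.
    have hKp : 0 < (K.+1%:R : R) by rewrite ltr0Sn.
    rewrite /e ltr_pdivrMr //.
    rewrite /B ltr_pdivrMr // in hBK; nra.
  have hm := emono _ _ hmK; have hp := emono _ _ hpK.
  have hq := para m p.
  rewrite /hnorm -/(qq _); apply: sqrt_lt_sq => //.
  have := e0 m; have := e0 p; have := e1 m; have := e1 p; nra.
have [l hl] := hcomplete cauchy.
have Nl : N l by apply: (cN (u := f)) => // m; case: (hf m).
exists l; split => // y hy.
have hle : nrm (x - l) <= d.
  apply/ler_addgt0Pr => eps heps.
  have heps2 : 0 < eps / 2 by rewrite divr_gt0.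
  have [K1 hK1] := hl _ heps2.
  have [K2 hK2] := archi_inv heps2.
  have h1 : nrm (f (maxn K1 K2) - l) < eps / 2 := hK1 _ (leq_maxl K1 K2).
  have h2 := hK2 _ (leq_maxr K1 K2).
  have [_ h3] := hf (maxn K1 K2).
  have := hnormD (x - f (maxn K1 K2)) (f (maxn K1 K2) - l).
  rewrite addrA subrK; move: h2 h3.
  move: ((maxn K1 K2).+1%:R^-1) => v h2 h3; lra.
have := dle _ hy; have := hnorm_ge0 (x - l); rewrite -!hnorm_sq; nra.
Qed.

Definition orthc : set H := [set z | forall y, N y -> ip y z = 0].

Lemma orth_from_rip z : (forall y, N y -> rip y z = 0) -> orthc z.
Proof.
move=> h y hy; apply: cmplx_eq0; first exact: h.
by rewrite -rip_i; apply: h; exact: NZ.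
Qed.

Theorem closed_complemented : complemented nrm N.
Proof.
exists orthc; split; [split|split; [|split]].
- by move=> y _; rewrite ip0r.
- by move=> a u v hu hv y hy; rewrite ipDr ipZr hu // hv // mulr0 addr0.
- move=> u l hu hc; apply: orth_from_rip => y hy.
  by apply: (orth_lim (u := u)) => // m; rewrite /rip hu.
- by move=> u hu hu'; apply: hip_def; apply: hu'.
- move=> x; have [y0 [hy0 hmin]] := proj_min x.
  exists y0, (x - y0); split => //; split; last by rewrite addrC subrK.
  apply: orth_from_rip => z hz; rewrite ripC.
  set w := x - y0; set r := rip w z.
  have key t : 0 <= t ^+ 2 * qq z - 2 * t * r.
    have := hmin (t%:C *: z + y0) (NZD _ hz hy0).
    have -> : x - (t%:C *: z + y0) = w + (- t)%:C *: z.
      by rewrite /w rmorphN scaleNr opprD addrCA [RHS]addrC.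
    by rewrite -/w qqD qqZ ripZr /r; lra.
  have hq := qq_ge0 z.
  set s := qq z + 1.
  have hs : 0 < s by rewrite /s; lra.
  set t := r / s.
  have ht : t * s = r by rewrite /t mulfVK // lt0r_neq0.
  have h0 : 0 <= s ^+ 2 * (t ^+ 2 * qq z - 2 * t * r).
    by apply: mulr_ge0; [exact: sqr_ge0 | exact: key].
  have hr : r ^+ 2 <= 0.
    have e : s ^+ 2 * (t ^+ 2 * qq z - 2 * t * r) = (t * s) ^+ 2 * qq z - 2 * (t * s) * r * s by ring.
    rewrite e ht /s in h0; nra.
  by apply/eqP; rewrite -sqrf_eq0 eq_le hr sqr_ge0.
Qed.
End Proj.
Section Enat.
Lemma enat_of_spec (ge : nat -> Prop) :
  (forall k j, (j <= k)%N -> ge k -> ge j) -> ge 0%N ->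
  (enat_of ge = None /\ forall k, ge k) \/
  (exists a, enat_of ge = Some a /\ ge a /\ ~ ge a.+1).
Proof.
move=> dw g0; rewrite /enat_of; case: pselect => [h|h]; first by left.
right; case: ex_minnP => m /asboolP hm hmin; exists m.-1; split => //.
have m0 : (0 < m)%N by case: m hm {hmin} => // /(_ g0).
rewrite prednK //; split => //.
apply/not_notP => hn; have := hmin m.-1 (asboolT hn).
by rewrite -ltnS prednK // ltnn.
Qed.

Lemma enat_of_some (ge : nat -> Prop) b :
  (forall k j, (j <= k)%N -> ge k -> ge j) -> ge b -> ~ ge b.+1 ->
  enat_of ge = Some b.
Proof.
move=> dw gb ngb.
have g0 : ge 0%N by apply: (dw b).
case: (enat_of_spec dw g0) => [[_ /(_ b.+1)]//|[a [-> [ga nga]]]].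
congr Some; apply/eqP; rewrite eqn_leq; apply/andP; split.
- by rewrite leqNgt; apply/negP => h; apply: ngb; apply: (dw a).
- by rewrite leqNgt; apply/negP => h; apply: nga; apply: (dw b).
Qed.

Lemma enat_of_le (ge : nat -> Prop) N :
  (forall k j, (j <= k)%N -> ge k -> ge j) -> ~ ge N.+1 ->
  ele (enat_of ge) (Some N).
Proof.
move=> dw ng.
have [g0|g0] := pselect (ge 0%N); last first.
  rewrite /enat_of; case: pselect => [h|h]; first by case: g0.
  case: ex_minnP => m _ hmin; have := hmin 0%N (asboolT g0).
  by rewrite leqn0 => /eqP ->.
case: (enat_of_spec dw g0) => [[_ /(_ N.+1)]//|[a [-> [ga nga]]]] /=.
by rewrite leqNgt; apply/negP => h; apply: ng; apply: (dw a).
Qed.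
End Enat.

Section Lin.
Variables (R : realType) (V W : lmodType R[i]).
Variable T : V -> W.
Hypothesis lT : linear_map T.
Lemma lin0 : T 0 = 0.
Proof.
have := lT 1 0 0; rewrite scale1r addr0 scale1r => h.
by apply/eqP; rewrite -(subrr (T 0)) {2}h addrK eqxx.
Qed.
Lemma linD x y : T (x + y) = T x + T y.
Proof. by have := lT 1 x y; rewrite !scale1r. Qed.
Lemma linZ a x : T (a *: x) = a *: T x.
Proof. by have := lT a x 0; rewrite !addr0 lin0 addr0. Qed.
Lemma linN x : T (- x) = - T x.
Proof. by rewrite -scaleN1r linZ scaleN1r. Qed.
Lemma linB x y : T (x - y) = T x - T y.
Proof. by rewrite linD linN. Qed.
Lemma linSum k (c : 'I_k -> R[i]) (v : 'I_k -> V) :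
  T (\sum_(i < k) c i *: v i) = \sum_(i < k) c i *: T (v i).
Proof.
elim/big_rec2: _ => [|i y1 y2 _ <-]; first exact: lin0.
by rewrite linD linZ.
Qed.

Lemma ker_subspace : subspace (ker T).
Proof.
split; first exact: lin0.
by move=> a x y; rewrite /ker /= => hx hy; rewrite lT hx hy scaler0 addr0.
Qed.
Lemma range_subspace : subspace (Defs.range T).
Proof.
split; first by exists 0; rewrite lin0.
by move=> a _ _ [x <-] [y <-]; exists (a *: x + y); rewrite lT.
Qed.
End Lin.

Lemma subspace_sum (R : realType) (V : lmodType R[i]) (M : set V) k
  (c : 'I_k -> R[i]) (v : 'I_k -> V) :
  subspace M -> (forall i, M (v i)) -> M (\sum_(i < k) c i *: v i).
Proof.
move=> [M0 MD] hv; elim/big_rec: _ => // i y _ hy; exact: MD.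
Qed.

Section Beta.
Variables (R : realType) (V W : lmodType R[i]).

Lemma ext_sum (M : set V) k j (hjk : (j <= k)%N) (c : 'I_j -> R[i]) (v : 'I_k -> V) :
  let c' := fun i : 'I_k => oapp c 0 (insub (val i) : option 'I_j) in
  (\sum_(i < k) c' i *: v i = \sum_(i < j) c i *: v (widen_ord hjk i)) /\
  (forall i, c' (widen_ord hjk i) = c i).
Proof.
move=> c'.
have hc i : c' (widen_ord hjk i) = c i.
  rewrite /c'; case: insubP => [u _ hu|]; last by rewrite /= ltn_ord.
  by congr c; apply: val_inj.
split => //.
rewrite (bigID (fun i : 'I_k => (i < j)%N)) /= big_ord_narrow [X in _ + X]big1 ?addr0.
  by apply: eq_bigr => i _; rewrite hc.
move=> i hi; rewrite /c'; case: insubP => [u hu _|_]; last by rewrite /= scale0r.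
by rewrite hu in hi.
Qed.

Lemma codim_down (M : set V) k j : (j <= k)%N -> codim_ge M k -> codim_ge M j.
Proof.
move=> hjk [v hv]; exists (fun i : 'I_j => v (widen_ord hjk i)) => c hc i.
have [e1 e2] := ext_sum M hjk c v.
have := hv (fun i : 'I_k => oapp c 0 (insub (val i) : option 'I_j)).
by rewrite e1 => /(_ hc (widen_ord hjk i)); rewrite e2.
Qed.

Lemma dim_down (N : set V) k j : (j <= k)%N -> dim_ge N k -> dim_ge N j.
Proof.
move=> hjk [v [hN hv]]; exists (fun i : 'I_j => v (widen_ord hjk i)); split => // c hc i.
have [e1 e2] := ext_sum N hjk c v.
have := hv (fun i : 'I_k => oapp c 0 (insub (val i) : option 'I_j)).
by rewrite e1 => /(_ hc (widen_ord hjk i)); rewrite e2.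
Qed.
End Beta.
Section BetaSurj.
Variables (R : realType) (V W : lmodType R[i]).
Variable T : V -> W.
Hypothesis lT : linear_map T.

Lemma beta_surj : (forall y, exists x, T x = y) -> beta T = Some 0%N.
Proof.
move=> hs; apply: enat_of_some.
- by move=> k j; apply: codim_down.
- by exists (fun _ => 0) => ? _ [].
- move=> [v hv]; have := hv (fun _ => 1); rewrite /Defs.range /=.
  have [x hx] := hs (\sum_(i < 1) 1 *: v i).
  by move=> /(_ (ex_intro _ x hx) ord0) /eqP; rewrite oner_eq0.
Qed.

Lemma beta_surj_inv : beta T = Some 0%N -> forall y, exists x, T x = y.
Proof.
move=> hb y; apply/not_notP => hy.
have g1 : codim_ge (Defs.range T) 1.
  exists (fun _ => y) => c hc i.
  rewrite big_ord1 in hc.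
  have [c0|c0] := eqVneq (c ord0) 0; first by rewrite (ord1 i).
  exfalso; apply: hy; case: hc => x hx.
  by exists ((c ord0)^-1 *: x); rewrite linZ // hx scalerA mulVf // scale1r.
have g0 : codim_ge (Defs.range T) 0 by exists (fun _ => 0) => ? _ [].
have [[hN _]|[a [ha [ga nga]]]] := enat_of_spec (@codim_down _ _ (Defs.range T)) g0.
  by move: hb; rewrite /beta /ecodim hN.
have a0 : a = 0%N by move: hb; rewrite /beta /ecodim ha => -[].
by apply: nga; rewrite a0.
Qed.
End BetaSurj.

Section ShiftL.
Variables (R : realType) (V : lmodType R[i]).
Variable T : V -> V.
Variable l : R[i].

Lemma shiftE x : shift l T x = - shiftm l T x.
Proof. by rewrite /shift /shiftm opprB. Qed.

Lemma linear_shiftm : linear_map T -> linear_map (shiftm l T).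
Proof.
move=> lT a x y; rewrite /shiftm lT scalerDr scalerBr opprD addrACA.
by rewrite !scalerA mulrC.
Qed.
Lemma linear_shift : linear_map T -> linear_map (shift l T).
Proof.
by move=> lT a x y; rewrite !shiftE linear_shiftm // opprD scalerN.
Qed.

Lemma ker_shift : ker (shift l T) = ker (shiftm l T).
Proof.
apply: funext => x; apply: propext; rewrite /ker /= shiftE; split.
  by move=> /eqP; rewrite oppr_eq0 => /eqP.
by move=> ->; rewrite oppr0.
Qed.

Lemma surj_shift : (forall y, exists x, shift l T x = y) <-> (forall y, exists x, shiftm l T x = y).
Proof.
split=> h y; have [x hx] := h (- y); exists x.
  by move: hx; rewrite shiftE => /eqP; rewrite eqr_opp => /eqP.
by rewrite shiftE hx opprK.
Qed.
End ShiftL.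
Section HBound.
Variables (R : realType) (H1 H2 : hilbert R).
Local Notation nrm1 := (@hnorm R H1).
Local Notation nrm2 := (@hnorm R H2).

Lemma ker_closed_bound (S : H1 -> H2) C : linear_map S -> 0 <= C ->
  (forall x, nrm2 (S x) <= C * nrm1 x) -> closed_norm nrm1 (ker S).
Proof.
move=> lS hC hb u z hu hc; rewrite /ker /=.
have small : nrm2 (S z) = 0.
  have h0 := hnorm_ge0 (S z).
  suff : `|nrm2 (S z)| = 0 by move/eqP; rewrite normr_eq0 => /eqP.
  apply/eqP; rewrite normr_eq0; apply/eqP; apply: small_eq0 => e he.
  have hd : 0 < e / (C + 1) by rewrite divr_gt0 // ltr_pwDr.
  have [K hK] := hc _ hd; have hm := hK K (leqnn K).
  have eq1 : S (u K - z) = - S z by rewrite linB // hu add0r.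
  have := hb (u K - z); rewrite eq1 hnormN => h1.
  have h3 : C * nrm1 (u K - z) <= C * (e / (C + 1)) by rewrite ler_wpM2l // ltW.
  have h4 : C * (e / (C + 1)) < e.
    rewrite mulrA ltr_pdivrMr ?ltr_pwDr //; nra.
  rewrite ger0_norm //; lra.
move: small; rewrite /hnorm -/(qq _) => /eqP; rewrite sqrtr_eq0 => h.
by apply: qq_eq0; apply/eqP; rewrite eq_le h qq_ge0.
Qed.
End HBound.

Section HShift.
Variables (R : realType) (H : hilbert R).
Local Notation nrm := (@hnorm R H).

Lemma qqZc (a : R[i]) (x : H) : qq (a *: x) = (complex.Re a ^+ 2 + complex.Im a ^+ 2) * qq x.
Proof.
rewrite {1}/qq ipZl ipZr ip_self; case: a => a b /=; ring.
Qed.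

Lemma nrmZ_le (a : R[i]) (x : H) :
  nrm (a *: x) <= (complex.Re a ^+ 2 + complex.Im a ^+ 2 + 1) * nrm x.
Proof.
rewrite {1}/hnorm -/(qq _); apply: sqrt_le_sq.
  by apply: mulr_ge0; [ | exact: hnorm_ge0]; rewrite addr_ge0 ?addr_ge0 ?sqr_ge0.
rewrite qqZc exprMn hnorm_sq.
set c := _ + _; have hc : 0 <= c by rewrite addr_ge0 ?sqr_ge0.
have := qq_ge0 x; nra.
Qed.

Lemma bounded_shiftm (D : H -> H) l : bounded_op nrm nrm D ->
  exists C, 0 <= C /\ forall x, nrm (shiftm l D x) <= C * nrm x.
Proof.
move=> [lD [K hK]].
set c := complex.Re l ^+ 2 + complex.Im l ^+ 2 + 1.
have hc : 0 <= c by rewrite addr_ge0 ?addr_ge0 ?sqr_ge0.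
exists (`|K| + c); split; first by rewrite addr_ge0.
move=> x; rewrite /shiftm; apply: le_trans (hnormD _ _) _.
rewrite hnormN mulrDl lerD //.
  apply: le_trans (hK x) _; rewrite ler_wpM2r ?hnorm_ge0 ?ler_norm //.
exact: nrmZ_le.
Qed.

Theorem hilbert_rinv (D : H -> H) l : bounded_op nrm nrm D ->
  (forall y, exists x, shiftm l D x = y) -> right_invertible nrm (shift l D).
Proof.
move=> hD hs; have lD := hD.1.
split.
  by apply: beta_surj; apply/surj_shift.
rewrite ker_shift; apply: closed_complemented.
  exact: ker_subspace (linear_shiftm _ lD).
have [C [hC hb]] := bounded_shiftm l hD.
exact: ker_closed_bound (linear_shiftm _ lD) hC hb.
Qed.
End HShift.
Section Rank.
Variables (R : realType) (W : lmodType R[i]).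

Definition sind m (w : 'I_m -> W) (I : {set 'I_m}) : Prop :=
  forall c : 'I_m -> R[i], (forall i, i \notin I -> c i = 0) ->
    \sum_(i < m) c i *: w i = 0 -> forall i, c i = 0.

Lemma sind_dim (Q : set W) m (w : 'I_m -> W) (I : {set 'I_m}) :
  (forall i, i \in I -> Q (w i)) -> sind w I -> dim_ge Q #|I|.
Proof.
move=> hQ hs.
have [I0|] := posnP #|I|.
  by rewrite I0; exists (fun _ => 0); split => [[]|? _ []].
move=> /card_gt0P [x0 hx0].
exists (fun t => w (enum_val t)); split; first by move=> t; apply: hQ; exact: enum_valP.
move=> c hc t.
pose c' := fun i : 'I_m => if i \in I then c (enum_rank_in hx0 i) else 0.
have e : \sum_(i < m) c' i *: w i = \sum_(t < #|I|) c t *: w (enum_val t).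
  rewrite (bigID (fun i => i \in I)) /= [X in _ + X]big1 ?addr0; last first.
    by move=> i /negbTE hi; rewrite /c' hi scale0r.
  rewrite big_enum_val /=.
  apply: eq_bigr => s _; rewrite /c' enum_valP enum_valK_in //.
have := hs c'; rewrite e => /(_ _ hc (enum_val t)).
  by rewrite /c' enum_valP enum_valK_in //; apply; move=> i /negbTE hi; rewrite /c' hi.
Qed.
End Rank.

Section RankLemma.
Variables (R : realType) (V W : lmodType R[i]).

Lemma rank_lemma (S : set V) (Q : set W) (P : V -> W) a m :
  subspace S -> linear_map P -> (forall x, S x -> Q (P x)) -> ~ dim_ge Q a.+1 ->
  dim_ge S m -> dim_ge (S `&` ker P) (m - a).
Proof.
move=> sS lP hQ nQ [v [hS hv]].
pose w := fun i => P (v i).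
pose pr k := `[< exists I : {set 'I_m}, sind w I /\ #|I| = k >].
have ex0 : exists k, pr k.
  exists 0%N; apply/asboolP; exists (finset.set0 : {set 'I_m}); split; last by rewrite cards0.
  by move=> c hc _ i; apply: hc; rewrite finset.in_set0.
have ub : forall k, pr k -> (k <= m)%N.
  by move=> k /asboolP [I [_ <-]]; apply: leq_trans (max_card _) _; rewrite card_ord.
case: (ex_maxnP ex0 ub) => k /asboolP [I [hI hk]] hmax.
have cardI : (#|I| <= a)%N.
  rewrite leqNgt; apply/negP => h; apply: nQ; apply: (@dim_down _ _ _ #|I|) => //.
  by apply: (sind_dim (w := w)) => // i _; apply: hQ.
have maxp j : j \notin I -> ~ sind w (j |: I).
  move=> hj hs; have := hmax #|j |: I| (asboolT (ex_intro _ (j |: I) (conj hs erefl))).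
  by rewrite cardsU1 hj hk ltnn.
have hch j : exists cj : 'I_m -> R[i], j \notin I ->
    (forall i, i \notin j |: I -> cj i = 0) /\ \sum_(i < m) cj i *: w i = 0 /\ cj j = 1.
  have [jI|jI] := boolP (j \in I); first by exists (fun _ => 0).
  apply/not_notP => hn; apply: (maxp j jI) => c hc hs.
  have [cj0|cj0] := eqVneq (c j) 0.
    apply: hI => // i hi; have [->//|ij] := eqVneq i j.
    by apply: hc; rewrite in_setU1 negb_or ij hi.
  exfalso; apply: hn; exists (fun i => (c j)^-1 * c i) => _; split.
    by move=> i hi; rewrite (hc i hi) mulr0.
  split; last by rewrite mulVf.
  have -> : \sum_(i < m) ((c j)^-1 * c i) *: w i = (c j)^-1 *: \sum_(i < m) c i *: w i.
    by rewrite scaler_sumr; apply: eq_bigr => i _; rewrite scalerA.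
  by rewrite hs scaler0.
have [cc hcc] := choice hch.
pose J := ~: I.
pose u := fun j => \sum_(i < m) cc j i *: v i.
have uS j : j \in J -> (S `&` ker P) (u j).
  rewrite finset.in_setC => hj; split; first by apply: subspace_sum.
  rewrite /ker /= /u linSum //; by have [_ [-> _]] := hcc j hj.
have us : sind u J.
  move=> e he hsum j0.
  have hsum' : \sum_(i < m) (\sum_(j < m) e j * cc j i) *: v i = 0.
    rewrite -[RHS]hsum /u.
    under [RHS]eq_bigr do rewrite scaler_sumr.
    rewrite exchange_big /=; apply: eq_bigr => i _; rewrite scaler_suml.
    by apply: eq_bigr => j _; rewrite scalerA.
  have hz := hv _ hsum' j0.
  have [j0I|j0I] := boolP (j0 \in I); first by apply: he; rewrite finset.in_setC j0I.
  rewrite (bigD1 j0) //= big1 ?addr0 in hz.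
    by have [_ [_ h1]] := hcc j0 j0I; rewrite h1 mulr1 in hz.
  move=> j hj; have [jI|jI] := boolP (j \in I).
    by rewrite he ?mul0r // finset.in_setC jI.
  have [h0 _] := hcc j jI; rewrite h0 ?mulr0 //.
  by rewrite in_setU1 negb_or eq_sym hj j0I.
have hd := sind_dim uS us.
apply: (@dim_down _ _ _ #|J|) => //.
move: cardI (cardsC I); rewrite card_ord -/J; move: #|I| #|J| => x y; lia.
Qed.
End RankLemma.
Section OpMat.
Variables (R : realType) (n : nat) (X : 'I_n -> hilbert R).
Variables (D : forall k : 'I_n, X k -> X k) (A : forall i j : 'I_n, X j -> X i) (l : R[i]).
Local Notation DS := (dsum X).
Hypothesis lD : forall k : 'I_n, linear_map (@D k).
Hypothesis lA : forall i j : 'I_n, (i < j)%N -> linear_map (@A i j).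

Local Notation E k := (shiftm l (@D k)).
Local Notation Tl := (shiftm l (Tnd D A)).

Lemma dsD (x y : DS) i : (x + y) i = x i + y i. Proof. by []. Qed.
Lemma dsZ a (x : DS) i : (a *: x) i = a *: x i. Proof. by []. Qed.
Lemma ds0 i : (0 : DS) i = 0. Proof. by []. Qed.
Lemma dsN (x : DS) i : (- x) i = - x i. Proof. by []. Qed.
Lemma dsB (x y : DS) i : (x - y) i = x i - y i. Proof. by []. Qed.

Lemma dsSum k (c : 'I_k -> R[i]) (v : 'I_k -> DS) i :
  (\sum_(t < k) c t *: v t) i = \sum_(t < k) c t *: v t i.
Proof. by elim/big_rec2: _ => // t y1 y2 _ <-. Qed.

Lemma ds_ext (x y : DS) : (forall i, x i = y i) -> x = y.
Proof. by move=> h; apply: functional_extensionality_dep. Qed.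

Lemma Tl_row (x : DS) (i : 'I_n) : Tl x i = E i (x i) + \sum_(j < n | (i < j)%N) @A i j (x j).
Proof. by rewrite /shiftm dsB dsZ /Tnd addrAC. Qed.

Lemma Tl_row_eq (x y : DS) (i : 'I_n) : (forall j : 'I_n, (i <= j)%N -> x j = y j) -> Tl x i = Tl y i.
Proof.
move=> h; rewrite !Tl_row h //; congr (_ + _); apply: eq_bigr => j hj.
by rewrite h // ltnW.
Qed.

Lemma linear_T : linear_map (Tnd D A).
Proof.
move=> a x y; apply: ds_ext => i; rewrite dsD dsZ /Tnd dsD dsZ lD.
rewrite scalerDr -addrA -addrA; congr (_ + _); rewrite addrCA; congr (_ + _).
rewrite scaler_sumr -big_split /=; apply: eq_bigr => j hj; rewrite dsD dsZ; exact: lA.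
Qed.

Lemma linear_Tl : linear_map Tl.
Proof. exact: linear_shiftm linear_T. Qed.

Section Construct.
Variable Mk : forall k : 'I_n, set (X k).
Hypothesis hdec : forall (k : 'I_n) (z : X k), exists p q, E k p = 0 /\ Mk q /\ z = p + q.
Hypothesis hsurj : forall (k : 'I_n) (w : X k), exists v, E k v = w.
Hypothesis hsub : forall k : 'I_n, subspace (@Mk k).

Lemma construct (b x : DS) : exists y : DS, (forall i, Tl y i = b i) /\ (forall i, Mk (x i - y i)).
Proof.
suff : forall t, (t <= n)%N -> exists y : DS, forall i : 'I_n, (n - t <= i)%N ->
    Tl y i = b i /\ Mk (x i - y i).
  move=> /(_ n (leqnn n)) [y hy]; exists y; split => i; have := hy i; rewrite subnn => /(_ isT) [].
    by [].
  by [].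
elim=> [|t IH] ht.
  by exists 0 => i; rewrite subn0 leqNgt ltn_ord.
have [y hy] := IH (ltnW ht).
have hs : (n - t.+1 < n)%N by rewrite subnSK // leq_subr.
pose s := Ordinal hs.
pose w := b s - \sum_(j < n | (s < j)%N) @A s j (y j).
have [v hv] := hsurj w.
have [p1 [q1 [hp1 [hq1 hv1]]]] := hdec v.
have [p2 [q2 [hp2 [hq2 hx]]]] := hdec (x s).
pose y' := dfwith y (q1 + p2).
exists y' => i hi.
have [eis|nis] := eqVneq s i.
  subst i; split.
    rewrite Tl_row /y' dfwith_in.
    rewrite (eq_bigr (fun j => @A s j (y j))); last first.
      by move=> j hj; rewrite dfwith_out // neq_ltn hj.
    have lE : linear_map (E s) by apply: linear_shiftm.
    rewrite (linD lE) hp2 addr0.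
    have -> : E s q1 = w by rewrite -hv hv1 (linD lE) hp1 add0r.
    by rewrite /w subrK.
  rewrite /y' dfwith_in.
  have -> : x s - (q1 + p2) = (-1) *: q1 + q2.
    by rewrite scaleN1r hx opprD [p2 + q2]addrC addrACA addrN addr0 addrC.
  by have [_ hM] := hsub s; apply: hM.
have hi' : (n - t <= i)%N.
  by move: hi nis; rewrite -(subnSK ht) leq_eqVlt => /orP [/eqP h|//]; rewrite -val_eqE /= h eqxx.
have [h1 h2] := hy i hi'; split.
  rewrite -h1; apply: Tl_row_eq => j hj; rewrite /y' dfwith_out //.
  apply/eqP => hsj; move: hj; rewrite -hsj => hj.
  by move: hi'; rewrite leqNgt => /negP; apply; apply: leq_ltn_trans hj _; rewrite /= subnSK.
by rewrite /y' dfwith_out.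
Qed.

Hypothesis hinter : forall (k : 'I_n) (z : X k), E k z = 0 -> Mk z -> z = 0.

Lemma inter0 (y : DS) : (forall i, Tl y i = 0) -> (forall i, Mk (y i)) -> y = 0.
Proof.
move=> hT hM; apply: ds_ext => i; rewrite ds0.
suff : forall t, (t <= n)%N -> forall i : 'I_n, (n - t <= i)%N -> y i = 0.
  by move=> /(_ n (leqnn n)) /(_ i); rewrite subnn; apply.
elim=> [|t IH] ht j hj.
  by move: hj; rewrite subn0 leqNgt ltn_ord.
have [hj'|hj'] := boolP (n - t <= j)%N; first exact: IH (ltnW ht) _ hj'.
apply: hinter (hM j); have := hT j; rewrite Tl_row big1 ?addr0 //.
move=> k hk; rewrite IH ?(ltnW ht) //; first exact: (lin0 (lA hk)).
by move: hj hk ht; lia.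
Qed.
End Construct.
End OpMat.
Section OpMat2.
Variables (R : realType) (n : nat) (X : 'I_n -> hilbert R).
Variables (D : forall k : 'I_n, X k -> X k) (A : forall i j : 'I_n, X j -> X i) (l : R[i]).
Local Notation DS := (dsum X).
Hypothesis lD : forall k : 'I_n, linear_map (@D k).
Hypothesis lA : forall i j : 'I_n, (i < j)%N -> linear_map (@A i j).
Local Notation E k := (shiftm l (@D k)).
Local Notation Tl := (shiftm l (Tnd D A)).

Lemma coord_le (x : DS) k : hnorm (x k) <= ds_norm x.
Proof.
rewrite /ds_norm -[hnorm (x k)]ger0_norm ?hnorm_ge0 // -sqrtr_sqr; apply: ler_wsqrtr.
rewrite (bigD1 k) //= lerDl; apply: sumr_ge0 => i _; exact: sqr_ge0.
Qed.

Lemma T_rinv : (forall k, right_invertible (@hnorm R (X k)) (shift l (@D k))) ->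
  right_invertible (@ds_norm R n X) (shift l (Tnd D A)).
Proof.
move=> hri.
have hs k : forall w : X k, exists v, E k v = w.
  by apply/surj_shift; apply: beta_surj_inv; [exact: linear_shift | exact: (hri k).1].
have hc k : complemented (@hnorm R (X k)) (ker (E k)).
  by rewrite -ker_shift; exact: (hri k).2.
pose Mk k := proj1_sig (cid (hc k)).
have hMk k : subspace (Mk k) /\ closed_norm (@hnorm R (X k)) (Mk k) /\
    (forall z, ker (E k) z -> Mk k z -> z = 0) /\
    (forall z, exists p q, ker (E k) p /\ Mk k q /\ z = p + q).
  exact: (proj2_sig (cid (hc k))).
have hdec k (z : X k) : exists p q, E k p = 0 /\ Mk k q /\ z = p + q.
  by have [_ [_ [_ h]]] := hMk k; exact: h.
have hsub k : subspace (Mk k) by case: (hMk k).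
have hint k (z : X k) : E k z = 0 -> Mk k z -> z = 0.
  by have [_ [_ [h _]]] := hMk k; exact: h.
split.
  apply: beta_surj; apply/surj_shift => b.
  have [y [hy _]] := construct A lD hdec hs hsub b 0.
  by exists y; apply: ds_ext.
rewrite ker_shift.
exists [set y : DS | forall k, Mk k (y k)]; split; [|split; [|split]].
- split; first by move=> k; case: (hsub k).
  by move=> a x y hx hy k; rewrite dsD dsZ; case: (hsub k) => _; apply.
- move=> u z hu hcv k; have [_ [hcl _]] := hMk k.
  apply: (hcl (fun m => u m k)) => [m|e he]; first exact: hu.
  have [N hN] := hcv e he; exists N => m hm.
  by apply: le_lt_trans (hN m hm); rewrite -dsB; exact: coord_le.
- move=> x hx hM; apply: (inter0 lA hint) => // i.
  by rewrite /ker /= in hx; rewrite hx.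
- move=> x; have [y [hy hM]] := construct A lD hdec hs hsub 0 x.
  exists y, (x - y); split; last by split => //; rewrite addrC subrK.
  by rewrite /ker /=; apply: ds_ext => i; rewrite hy.
Qed.
End OpMat2.
Lemma big_eadd_None (I : eqType) (r : seq I) (P : pred I) (F : I -> enat) s :
  s \in r -> P s -> F s = None -> \big[eadd/Some 0%N]_(i <- r | P i) F i = None.
Proof.
elim: r => // x r IH; rewrite in_cons big_cons => /orP [/eqP <-|hr] hP hF.
  by rewrite hP hF.
by case: (P x); rewrite ?IH //; case: (F x).
Qed.

Lemma big_eadd_Some (I : Type) (r : seq I) (P : pred I) (F : I -> enat) (a : I -> nat) :
  (forall i, P i -> F i = Some (a i)) ->
  \big[eadd/Some 0%N]_(i <- r | P i) F i = Some (\sum_(i <- r | P i) a i)%N.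
Proof. by move=> h; elim/big_rec2: _ => // i y1 y2 hP ->; rewrite h. Qed.

Lemma dim_sub (R : realType) (V : lmodType R[i]) (N1 N2 : set V) m :
  (forall x, N1 x -> N2 x) -> dim_ge N1 m -> dim_ge N2 m.
Proof. by move=> h [v [hv hi]]; exists v; split => // i; apply: h. Qed.

Lemma alpha_fin (R : realType) (V : lmodType R[i]) (T : V -> V) a :
  alpha T = Some a -> ~ dim_ge (ker T) a.+1.
Proof.
move=> h.
have g0 : dim_ge (ker T) 0 by exists (fun _ => 0); split => [[]|? _ []].
have [[hN _]|[b [hb [gb ngb]]]] := enat_of_spec (@dim_down _ _ (ker T)) g0.
  by move: h; rewrite /alpha /edim hN.
by move: h; rewrite /alpha /edim hb => -[<-].
Qed.

Section Dim.
Variables (R : realType) (n : nat) (X : 'I_n -> hilbert R).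
Variables (D : forall k : 'I_n, X k -> X k) (A : forall i j : 'I_n, X j -> X i) (l : R[i]).
Local Notation DS := (dsum X).
Hypothesis lD : forall k : 'I_n, linear_map (@D k).
Hypothesis lA : forall i j : 'I_n, (i < j)%N -> linear_map (@A i j).
Local Notation E k := (shiftm l (@D k)).
Local Notation Tl := (shiftm l (Tnd D A)).
Hypothesis hTs : forall b : DS, exists y, Tl y = b.

Lemma last_surj (k : 'I_n) : (n <= k.+1)%N -> forall z : X k, exists v, E k v = z.
Proof.
move=> hk z; have [y hy] := hTs (dfwith (0 : DS) z).
exists (y k); have := Tl_row D A l y k; rewrite hy dfwith_in big1 ?addr0 //.
by move=> j hj; exfalso; move: hj (ltn_ord j) hk; lia.
Qed.

Variable k : 'I_n.
Variable a : 'I_n -> nat.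
Hypothesis ha : forall s : 'I_n, (k < s)%N -> ~ dim_ge (ker (E s)) (a s).+1.

Definition St (t : nat) : set DS :=
  [set w | (forall j : 'I_n, (j <= k)%N || (t <= j)%N -> w j = 0) /\
           (forall j : 'I_n, (k < j)%N -> Tl w j = 0)].

Lemma St_sub t : subspace (St t).
Proof.
split.
  split => j _; first by [].
  by rewrite (lin0 (linear_Tl l lD lA)).
move=> c x y [hx1 hx2] [hy1 hy2]; split => j hj.
  by rewrite dsD dsZ hx1 // hy1 // scaler0 addr0.
by rewrite (linear_Tl l lD lA) dsD dsZ hx2 // hy2 // scaler0 addr0.
Qed.

Lemma St_base (w : DS) : St k.+1 w -> w = 0.
Proof.
move=> [h _]; apply: ds_ext => j; rewrite ds0; apply: h.
by case: (leqP j k).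
Qed.

Lemma chain d : (k.+1 + d <= n)%N -> forall m, dim_ge (St (k.+1 + d)) m ->
  (m <= \sum_(s < n | (k < s < k.+1 + d)%N) a s)%N.
Proof.
elim: d => [|d IH] hd m.
  rewrite addn0 => -[v [hv hi]].
  case: m v hv hi => // m v hv hi; exfalso.
  have := hi (fun _ => 1); rewrite big1 => [/(_ erefl ord0) /eqP|i _].
    by rewrite oner_eq0.
  by rewrite (St_base (hv i)) scaler0.
move=> hdim.
have ht : (k + d.+1 < n)%N by move: hd; lia.
pose s := Ordinal ht.
have hks : (k < s)%N by rewrite /=; lia.
have lP : linear_map (fun w : DS => w s) by [].
have hQ : forall w : DS, St (k.+1 + d.+1) w -> ker (E s) (w s).
  move=> w [h1 h2]; rewrite /ker /=.
  have := h2 s hks; rewrite (Tl_row D A l) big1 ?addr0 //.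
  move=> j hj; rewrite h1; first exact: (lin0 (lA hj)).
  by rewrite orbC /= addnS addSn -addnS; apply/orP; left.
have := rank_lemma (St_sub _) lP hQ (ha hks) hdim.
move=> hd2.
have hsub : forall w, (St (k.+1 + d.+1) `&` ker (fun w : DS => w s)) w -> St (k.+1 + d) w.
  move=> w [[h1 h2] h3]; split => // j /orP [hj|hj]; first by apply: h1; rewrite hj.
  have [ej|nej] := eqVneq j s; first by rewrite ej.
  apply: h1; apply/orP; right.
  move: hj nej; rewrite -val_eqE /=; lia.
have hd1 : (k.+1 + d <= n)%N by move: hd; lia.
have := IH hd1 _ (dim_sub hsub hd2).
move=> hIH; rewrite (bigD1 s) /=; last by rewrite hks /=; lia.
set S1 := \sum_(i < n | _) _ in hIH; set S2 := \sum_(i < n | _) _.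
have -> : S2 = S1.
  rewrite /S1 /S2; apply: eq_bigl => i; rewrite -val_eqE /=.
  apply/idP/idP.
    by move=> /andP [/andP [h1 h2] h3]; apply/andP; split => //; move: h2 h3; lia.
  by move=> /andP [h1 h2]; apply/andP; split; [apply/andP; split => //; lia | move: h2; lia].
move: hIH; lia.
Qed.

Lemma codim_bound : ~ codim_ge (Defs.range (E k)) (\sum_(s < n | (k < s)%N) a s).+1.
Proof.
set N := \sum_(s < n | (k < s)%N) a s.
move=> [v hv].
have hy : forall i : 'I_N.+1, exists y : DS, Tl y = dfwith (0 : DS) (v i).
  by move=> i; apply: hTs.
have [y hy'] := choice hy.
pose w := fun i : 'I_N.+1 => ((fun j : 'I_n => if (k < j)%N then y i j else 0) : DS).
have wS : forall i, St n (w i).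
  move=> i; split.
    move=> j /orP [hj|hj]; last by move: (ltn_ord j) hj; lia.
    by rewrite /w ifN // -leqNgt.
  move=> j hj.
  rewrite (@Tl_row_eq _ _ _ D A l (w i) (y i) j); last first.
    by move=> j' hj'; rewrite /w ifT //; move: hj hj'; lia.
  by rewrite hy' dfwith_out //; apply/eqP => e; move: hj; rewrite -e ltnn.
have wI : indep_mod [set 0] w.
  move=> c hc; apply: hv.
  pose Y := \sum_(i < N.+1) c i *: y i.
  exists (Y k).
  have TY : Tl Y k = \sum_(i < N.+1) c i *: v i.
    rewrite /Y (linSum (linear_Tl l lD lA)) dsSum.
    by apply: eq_bigr => t _; rewrite hy' dfwith_in.
  rewrite -TY (Tl_row D A l) big1 ?addr0 // => j hj.
  have -> : Y j = 0.
    rewrite /Y dsSum; have := congr1 (fun f : DS => f j) hc.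
    rewrite /= dsSum ds0 => h; apply: etrans h; apply: eq_bigr => t _; by rewrite /w ifT.
  exact: (lin0 (lA hj)).
have hn : (k.+1 + (n - k.+1))%N = n by rewrite subnKC // ltn_ord.
have := @chain (n - k.+1) _ N.+1; rewrite hn => /(_ (leqnn n)).
have -> : \sum_(s < n | (k < s < n)%N) a s = N.
  by apply: eq_bigl => s; rewrite ltn_ord andbT.
by move=> /(_ (ex_intro _ w (conj wS wI))); rewrite ltnn.
Qed.
End Dim.
Unset Implicit Arguments.
Theorem mainTheorem14 (R : realType) (n : nat) (X : 'I_n -> hilbert R)
    (D : forall k : 'I_n, X k -> X k) :
  (2 <= n)%N ->
  (forall k, infinite_dim (X k)) ->
  (forall k, bounded_op (@hnorm R (X k)) (@hnorm R (X k)) (D k)) ->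
  let Delta : set R[i] :=
    [set l | exists k : 'I_n, (k.+1 < n)%N /\ sigma_r (@hnorm R (X k)) (D k) l /\
       ele (beta (shiftm l (D k)))
           (\big[eadd/Some 0%N]_(s < n | (k < s)%N) alpha (shiftm l (D s)))] in
  forall A : forall i j : 'I_n, X j -> X i,
    (forall i j : 'I_n, (i < j)%N -> bounded_op (@hnorm R (X j)) (@hnorm R (X i)) (A i j)) ->
    [set l | exists k : 'I_n, sigma_r (@hnorm R (X k)) (D k) l]
      = sigma_r (@ds_norm R n X) (Tnd D A) `|` Delta
    /\ (Delta = set0 ->
        [set l | exists k : 'I_n, sigma_r (@hnorm R (X k)) (D k) l]
          = sigma_r (@ds_norm R n X) (Tnd D A)).
Proof.
move=> hn _ hD Delta A hA.
have lD : forall k : 'I_n, linear_map (D k) by move=> k; exact: (hD k).1.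
have lA : forall i j : 'I_n, (i < j)%N -> linear_map (A i j) by move=> i j h; exact: (hA i j h).1.
have main : [set l | exists k : 'I_n, sigma_r (@hnorm R (X k)) (D k) l]
      = sigma_r (@ds_norm R n X) (Tnd D A) `|` Delta.
  apply/seteqP; split => lam.
    move=> [k hk].
    have [h|h] := pselect (sigma_r (@ds_norm R n X) (Tnd D A) lam); first by left.
    right.
    have hri : right_invertible (@ds_norm R n X) (shift lam (Tnd D A)) by apply/not_notP.
    have hTs : forall b, exists y, shiftm lam (Tnd D A) y = b.
      apply/surj_shift; apply: beta_surj_inv hri.1.
      exact: linear_shift (linear_T lD lA).
    exists k; split.
      rewrite ltnNge; apply/negP => hk'; apply: hk.
      by apply: hilbert_rinv => //; exact: (last_surj hTs hk').
    split => //.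
    have [[s [hs hN]]|hF] := pselect (exists s : 'I_n, (k < s)%N /\ alpha (shiftm lam (D s)) = None).
      by rewrite (big_eadd_None (mem_index_enum s) hs hN); case: beta.
    pose a s := odflt 0%N (alpha (shiftm lam (D s))).
    have ha : forall s : 'I_n, (k < s)%N -> alpha (shiftm lam (D s)) = Some (a s).
      move=> s hs; rewrite /a; case e: (alpha _) => [x|] //.
      by exfalso; apply: hF; exists s.
    rewrite (big_eadd_Some _ ha).
    apply: enat_of_le; first by move=> ? ?; apply: codim_down.
    apply: (codim_bound lD lA hTs) => s hs.
    exact: alpha_fin (ha s hs).
  move=> [h|[k [_ [hk _]]]]; last by exists k.
  apply/not_notP => hne; apply: h.
  apply: T_rinv => // k; apply/not_notP => hk; apply: hne; by exists k.
by split => // hD0; rewrite main hD0 setU0.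
Qed.
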